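(* There exist a finitary weakly cartesian monad $T$ on $\mathsf{Set}$ and a $T$-algebra $(A,e)$ such that the bar construction $X=\mathrm{Bar}(T,A)$ contains an inner horn of shape $\Lambda^3_1$ with no filler and an inner horn of shape $\Lambda^3_2$ with no filler.
   Context: A monad $(T,\eta,\mu)$ on $\mathsf{Set}$ is weakly cartesian if $T$ preserves weak pullbacks and every naturality square of $\eta$ and of $\mu$ is a weak pullback (a commutative square of sets with $f:A\to B$, $g:A\to C$, $m:B\to D$, $n:C\to D$ is a weak pullback if for all $b,c$ with $m(b)=n(c)$ there is $a$ with $f(a)=b$, $g(a)=c$). The bar construction of a $T$-algebra $(A,e)$ is the simplicial set $X$ with $X_n=T^{n+1}A$, face maps $d_{n,0}=T^ne$ and $d_{n,i}=T^{n-i}\mu_{T^{i-1}A}$ for $1\le i\le n$, and degeneracies $s_{n,i}=T^{n-i+1}\eta_{T^iA}$ for $0\le i\le n$. For $0<k<3$, an inner horn of shape $\Lambda^3_k$ in $X$ is a family $(x_i)_{i\in\{0,1,2,3\}\setminus\{k\}}$ of elements of $X_2$ with $d_ix_j=d_{j-1}x_i$ for all $i<j$ with $i,j\neq k$; a filler is an element $y\in X_3$ with $d_iy=x_i$ for all $i\neq k$. *)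

(* Defs.v *)
(* monads on Set are modelled as endofunctors on Rocq's Type. *)
From Stdlib Require Import List.

Record Monad := {
  T : Type -> Type;
  fmap : forall X Y : Type, (X -> Y) -> T X -> T Y;
  eta : forall X : Type, X -> T X;
  mu : forall X : Type, T (T X) -> T X;
  fmap_id : forall X (x : T X), fmap X X (fun a => a) x = x;
  fmap_comp : forall X Y Z (f : X -> Y) (g : Y -> Z) (x : T X),
      fmap X Z (fun a => g (f a)) x = fmap Y Z g (fmap X Y f x);
  eta_nat : forall X Y (f : X -> Y) (a : X), fmap X Y f (eta X a) = eta Y (f a);
  mu_nat : forall X Y (f : X -> Y) (x : T (T X)),
      fmap X Y f (mu X x) = mu Y (fmap (T X) (T Y) (fmap X Y f) x);
  mu_eta_l : forall X (x : T X), mu X (eta (T X) x) = x;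
  mu_eta_r : forall X (x : T X), mu X (fmap X (T X) (eta X) x) = x;
  mu_assoc : forall X (x : T (T (T X))),
      mu X (mu (T X) x) = mu X (fmap (T (T X)) (T X) (mu X) x)
}.

Arguments fmap {_ _ _} _ _.
Arguments eta {_ _} _.
Arguments mu {_ _} _.

Definition is_weak_pullback {A B C D : Type}
  (f : A -> B) (g : A -> C) (m : B -> D) (n : C -> D) : Prop :=
  (forall a, m (f a) = n (g a)) /\
  (forall b c, m b = n c -> exists a, f a = b /\ g a = c).

Definition preserves_weak_pullbacks (M : Monad) : Prop :=
  forall (A B C D : Type) (f : A -> B) (g : A -> C) (m : B -> D) (n : C -> D),
    is_weak_pullback f g m n ->
    is_weak_pullback (fmap (m:=M) f) (fmap (m:=M) g) (fmap (m:=M) m) (fmap (m:=M) n).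

Definition weakly_cartesian (M : Monad) : Prop :=
  preserves_weak_pullbacks M /\
  (forall (X Y : Type) (h : X -> Y),
      is_weak_pullback h (@eta M X) (@eta M Y) (fmap (m:=M) h)) /\
  (forall (X Y : Type) (h : X -> Y),
      is_weak_pullback (fmap (m:=M) (fmap (m:=M) h)) (@mu M X) (@mu M Y) (fmap (m:=M) h)).

(** Finitary (for Set-functors, equivalently: every element of T X lies in the
    image of T S -> T X for some finite subset S of X). *)
Definition finitary (M : Monad) : Prop :=
  forall (X : Type) (x : T M X),
    exists (l : list X) (y : T M {z : X | In z l}),
      fmap (m:=M) (@proj1_sig X (fun z => In z l)) y = x.

Definition is_algebra (M : Monad) (A : Type) (e : T M A -> A) : Prop :=
  (forall a, e (eta a) = a) /\
  (forall x : T M (T M A), e (mu x) = e (fmap (m:=M) e x)).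

Section Bar.
Variables (M : Monad) (A : Type) (e : T M A -> A).
Let TT := T M.

Definition X1 := TT (TT A).
Definition X2 := TT (TT (TT A)).
Definition X3 := TT (TT (TT (TT A))).

Definition d2 (i : nat) : X2 -> X1 :=
  match i with
  | 0 => fmap (m:=M) (fmap (m:=M) e)
  | 1 => fmap (m:=M) (@mu M A)
  | _ => @mu M (TT A)
  end.

Definition d3 (i : nat) : X3 -> X2 :=
  match i with
  | 0 => fmap (m:=M) (fmap (m:=M) (fmap (m:=M) e))
  | 1 => fmap (m:=M) (fmap (m:=M) (@mu M A))
  | 2 => fmap (m:=M) (@mu M (TT A))
  | _ => @mu M (TT (TT A))
  end.

(** An inner horn of shape Lambda^3_k: the family (x i)_{i in {0,1,2,3}, i <> k}
    (the value x k is ignored). *)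
Definition is_horn3 (k : nat) (x : nat -> X2) : Prop :=
  forall i j, i < j -> j <= 3 -> i <> k -> j <> k ->
    d2 i (x j) = d2 (j - 1) (x i).

Definition has_filler3 (k : nat) (x : nat -> X2) : Prop :=
  exists y : X3, forall i, i <= 3 -> i <> k -> d3 i y = x i.

End Bar.

(* Main.v *)
Require Import Defs.
From Stdlib Require Import List.
From Stdlib Require Import Permutation Lia ProofIrrelevance FunctionalExtensionality PropExtensionality ClassicalEpsilon.
Import ListNotations.

Definition bag (X : Type) : Type :=
  { P : list X -> Prop | exists l, P = fun l' => Permutation l l' }.

Definition cls {X} (l : list X) : bag X :=
  exist _ (fun l' => Permutation l l') (ex_intro _ l eq_refl).

Definition rep {X} (b : bag X) : list X :=
  match b with exist _ P H => proj1_sig (constructive_indefinite_description _ H) end.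

Lemma bag_ext {X} (a b : bag X) : proj1_sig a = proj1_sig b -> a = b.
Proof.
  destruct a as [P HP], b as [Q HQ]; simpl; intro E; subst.
  f_equal; apply proof_irrelevance.
Qed.

Lemma cls_eq {X} (l1 l2 : list X) : cls l1 = cls l2 <-> Permutation l1 l2.
Proof.
  split.
  - intro E. apply (f_equal (@proj1_sig _ _)) in E. simpl in E.
    apply (f_equal (fun P => P l2)) in E. rewrite E. apply Permutation_refl.
  - intro H. apply bag_ext; simpl. extensionality l'.
    apply propositional_extensionality; split; intro H'.
    + eapply Permutation_trans; [apply Permutation_sym, H|exact H'].
    + eapply Permutation_trans; [apply H|exact H'].
Qed.

Lemma cls_rep {X} (b : bag X) : cls (rep b) = b.
Proof.
  apply bag_ext. destruct b as [P H]; simpl.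
  destruct (constructive_indefinite_description _ H) as [l Hl]; simpl.
  symmetry; exact Hl.
Qed.

Lemma rep_cls {X} (l : list X) : Permutation (rep (cls l)) l.
Proof. apply cls_eq. apply cls_rep. Qed.

Lemma bag_surj {X} (b : bag X) : exists l, b = cls l.
Proof. exists (rep b); symmetry; apply cls_rep. Qed.

Lemma list_surj {X} (L : list (bag X)) : exists ls, L = map cls ls.
Proof.
  exists (map rep L). rewrite map_map. rewrite <- (map_id L) at 1.
  apply map_ext. intro; symmetry; apply cls_rep.
Qed.

Definition bmap {X Y} (f : X -> Y) (b : bag X) : bag Y := cls (map f (rep b)).
Definition beta {X} (x : X) : bag X := cls [x].
Definition bmu {X} (B : bag (bag X)) : bag X := cls (concat (map rep (rep B))).

Arguments cls : simpl never.
Arguments rep : simpl never.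
Arguments bmap : simpl never.
Arguments bmu : simpl never.

Lemma bmap_cls {X Y} (f : X -> Y) l : bmap f (cls l) = cls (map f l).
Proof. unfold bmap. apply cls_eq. apply Permutation_map, rep_cls. Qed.

Lemma perm_concat_map {X} (L L' : list (bag X)) :
  Permutation L L' -> Permutation (concat (map rep L)) (concat (map rep L')).
Proof.
  induction 1; simpl.
  - constructor.
  - apply Permutation_app_head; auto.
  - rewrite !app_assoc. apply Permutation_app_tail, Permutation_app_comm.
  - eapply Permutation_trans; eauto.
Qed.

Lemma bmu_cls {X} (ls : list (list X)) : bmu (cls (map cls ls)) = cls (concat ls).
Proof.
  unfold bmu. apply cls_eq.
  eapply Permutation_trans; [apply perm_concat_map, rep_cls|].
  induction ls; simpl; [constructor|].
  apply Permutation_app; [apply rep_cls|exact IHls].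
Qed.

Lemma bmu_cls_gen {X} (L : list (bag X)) ls : L = map cls ls -> bmu (cls L) = cls (concat ls).
Proof. intros ->; apply bmu_cls. Qed.

Lemma concat_concat {X} (lss : list (list (list X))) :
  concat (concat lss) = concat (map (@concat X) lss).
Proof. induction lss; simpl; auto. rewrite concat_app, IHlss; auto. Qed.

Lemma concat_single {X} (l : list X) : concat (map (fun a => [a]) l) = l.
Proof. induction l; simpl; f_equal; auto. Qed.

Definition bagM : Monad.
Proof.
  refine {| T := bag; fmap := @bmap; eta := @beta; mu := @bmu |}.
  - intros X x. destruct (bag_surj x) as [l ->]. rewrite bmap_cls, map_id; auto.
  - intros X Y Z f g x. destruct (bag_surj x) as [l ->]. rewrite !bmap_cls, map_map; auto.
  - intros. unfold beta. rewrite bmap_cls; auto.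
  - intros X Y f x. destruct (bag_surj x) as [L ->]. destruct (list_surj L) as [ls ->].
    rewrite bmu_cls, bmap_cls, bmap_cls, map_map.
    rewrite (map_ext (fun x => bmap f (cls x)) (fun x => cls (map f x))) by (intro; apply bmap_cls).
    rewrite <- (map_map (map f) cls), bmu_cls, concat_map; auto.
  - intros X x. destruct (bag_surj x) as [l ->]. unfold beta.
    change [cls l] with (map cls [l]). rewrite bmu_cls; simpl. rewrite app_nil_r; auto.
  - intros X x. destruct (bag_surj x) as [l ->]. rewrite bmap_cls.
    replace (map (@beta X) l) with (map cls (map (fun b => [b]) l)) by (rewrite map_map; reflexivity).
    rewrite bmu_cls, concat_single; auto.
  - intros X x. destruct (bag_surj x) as [L ->]. destruct (list_surj L) as [Ls ->].
    assert (exists lss, Ls = map (map cls) lss) as [lss ->].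
    { exists (map (map rep) Ls). rewrite map_map. rewrite <- (map_id Ls) at 1.
      apply map_ext. intro l. rewrite map_map. rewrite <- (map_id l) at 1.
      apply map_ext. intro; symmetry; apply cls_rep. }
    rewrite bmu_cls, <- concat_map, bmu_cls, bmap_cls, map_map, map_map.
    rewrite (map_ext (fun x => bmu (cls (map cls x))) (fun x => cls (concat x))) by (intro; apply bmu_cls).
    rewrite <- (map_map (@concat X) cls), bmu_cls, concat_concat; auto.
Defined.

Lemma T_bagM X : T bagM X = bag X. Proof. reflexivity. Qed.

Lemma fmap_bagM X Y (f : X -> Y) (x : bag X) : fmap (m:=bagM) f x = bmap f x.
Proof. reflexivity. Qed.

Lemma wp_lists {A B C D} (f : A -> B) (g : A -> C) (m : B -> D) (n : C -> D) :
  is_weak_pullback f g m n ->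
  forall lb lc, Permutation (map m lb) (map n lc) ->
  exists la, map f la = lb /\ Permutation (map g la) lc.
Proof.
  intros [_ Hw] lb. induction lb as [|b0 lb IH]; intros lc Hp.
  - simpl in Hp. apply Permutation_nil in Hp. destruct lc; [|discriminate].
    exists []; split; constructor.
  - simpl in Hp. assert (Hin : In (m b0) (map n lc)) by (eapply Permutation_in; [exact Hp|left; auto]).
    apply in_map_iff in Hin as [c0 [Hc0 Hin]].
    apply in_split in Hin as [lc1 [lc2 ->]].
    rewrite map_app in Hp; simpl in Hp. rewrite Hc0 in Hp.
    apply Permutation_cons_app_inv in Hp. rewrite <- map_app in Hp.
    destruct (IH _ Hp) as [la [E P]].
    destruct (Hw b0 c0 (eq_sym Hc0)) as [a0 [Ha1 Ha2]].
    exists (a0 :: la); simpl; split; [congruence|].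
    rewrite Ha2. eapply Permutation_trans; [apply perm_skip, P|apply Permutation_middle].
Qed.

Lemma concat_map_inv {X Y} (h : X -> Y) (ls : list (list Y)) (l3 : list X) :
  concat ls = map h l3 -> exists lss, ls = map (map h) lss /\ concat lss = l3.
Proof.
  revert l3; induction ls as [|l ls IH]; intros l3 E; simpl in *.
  - exists []; split; auto. destruct l3; [auto|discriminate].
  - symmetry in E. apply map_eq_app in E as [l1' [l2' [-> [E1 E2]]]].
    destruct (IH l2' (eq_sym E2)) as [lss [-> E3]].
    exists (l1' :: lss); simpl; split; congruence.
Qed.

Lemma bagM_wc : weakly_cartesian bagM.
Proof.
  split; [|split].
  - intros A B C D f g m n Hwp. split.
    + intro a. rewrite !fmap_bagM. destruct (bag_surj a) as [l ->].
      rewrite !bmap_cls, !map_map. f_equal. apply map_ext. intro; apply (proj1 Hwp).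
    + intros b c. rewrite !fmap_bagM. destruct (bag_surj b) as [lb ->]. destruct (bag_surj c) as [lc ->].
      rewrite !bmap_cls. intro E. apply cls_eq in E.
      destruct (wp_lists f g m n Hwp lb lc E) as [la [E1 E2]].
      exists (cls la). rewrite !fmap_bagM, !bmap_cls. split; [congruence|]. apply cls_eq; auto.
  - intros X Y h. split.
    + intro a. simpl. unfold beta. rewrite bmap_cls; auto.
    + intros y bx. simpl. unfold beta. destruct (bag_surj bx) as [l ->]. rewrite bmap_cls.
      intro E. apply cls_eq, Permutation_length_1_inv in E.
      destruct l as [|x [|]]; try discriminate. simpl in E. injection E as <-.
      exists x; auto.
  - intros X Y h. split.
    + intro a. symmetry. apply (mu_nat bagM).
    + intros beta0 alpha. simpl.
      destruct (bag_surj beta0) as [L ->]. destruct (list_surj L) as [ls ->].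
      destruct (bag_surj alpha) as [la ->].
      rewrite bmu_cls, bmap_cls. intro E. apply cls_eq in E.
      apply Permutation_map_inv in E as [l3 [E P]].
      apply concat_map_inv in E as [lss [-> E]].
      exists (cls (map cls lss)). rewrite bmap_cls, bmu_cls, map_map. split.
      * f_equal. rewrite map_map. apply map_ext. intro; apply bmap_cls.
      * apply cls_eq. rewrite E. apply Permutation_sym, P.
Qed.

Lemma lift_list {X} (l0 : list X) : forall l, incl l l0 ->
  exists l' : list {z : X | In z l0}, map (@proj1_sig X _) l' = l.
Proof.
  induction l as [|a l IH]; intro Hi.
  - exists []; auto.
  - destruct IH as [l' E]. { intros z Hz; apply Hi; right; auto. }
    exists (exist _ a (Hi a (or_introl eq_refl)) :: l'); simpl; congruence.
Qed.

Lemma bagM_fin : finitary bagM.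
Proof.
  intros X x. destruct (bag_surj x) as [l ->].
  destruct (lift_list l l (incl_refl l)) as [l' E].
  exists l, (cls l'). rewrite fmap_bagM, bmap_cls, E; auto.
Qed.

Definition mem {X} (a : X) (b : bag X) := In a (rep b).

Lemma mem_cls {X} (a : X) l : mem a (cls l) <-> In a l.
Proof.
  unfold mem; split; intro H; eapply Permutation_in; try eassumption.
  - apply rep_cls.
  - apply Permutation_sym, rep_cls.
Qed.

Lemma mem_bmap_inv {X Y} (f : X -> Y) z b : mem z (bmap f b) -> exists a, mem a b /\ f a = z.
Proof.
  destruct (bag_surj b) as [l ->]. rewrite bmap_cls, mem_cls. intro H.
  apply in_map_iff in H as [a [E H]]. exists a; rewrite mem_cls; auto.
Qed.

Lemma mem_bmap {X Y} (f : X -> Y) a b : mem a b -> mem (f a) (bmap f b).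
Proof.
  destruct (bag_surj b) as [l ->]. rewrite bmap_cls, !mem_cls. apply in_map.
Qed.

Lemma mem_bmu {X} (a : X) P B : mem a P -> mem P B -> mem a (bmu B).
Proof.
  destruct (bag_surj B) as [L ->]. destruct (list_surj L) as [ls ->].
  rewrite bmu_cls, mem_cls, mem_cls. intros H1 H2.
  apply in_map_iff in H2 as [l [<- H2]]. rewrite mem_cls in H1.
  apply in_concat; eauto.
Qed.

Lemma bmap_inv {X Y} (f : X -> Y) b l : bmap f b = cls l -> exists l', b = cls l' /\ map f l' = l.
Proof.
  destruct (bag_surj b) as [lb ->]. rewrite bmap_cls. intro E. apply cls_eq, Permutation_sym in E.
  apply Permutation_map_inv in E as [l3 [E P]]. exists l3; split; auto.
  apply cls_eq; auto.
Qed.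

Ltac unmap L :=
  match L with
  | @nil (bag ?X) => constr:(@nil (list X))
  | cons (cls ?a) ?L' => let r := unmap L' in constr:(cons a r)
  end.

Ltac norm := repeat (first [ rewrite bmap_cls
  | match goal with |- context [bmu (cls ?L)] =>
      let ls := unmap L in rewrite (bmu_cls_gen L ls eq_refl) end ]; cbn [map concat app]).

Definition e0 : bag unit -> unit := fun _ => tt.

Notation n1 := (cls [tt]).
Notation n2 := (cls [tt; tt]).
Notation n3 := (cls [tt; tt; tt]).
Notation n4 := (cls [tt; tt; tt; tt]).

Lemma n12 : n1 <> n2.
Proof. intro E. apply cls_eq, Permutation_length in E. discriminate. Qed.

Definition hA0 : bag (bag (bag unit)) := cls [cls [n2]; cls [n1; n1]].
Definition hA2 : bag (bag (bag unit)) := cls [cls [n1; n1]; cls [n2; n2]].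
Definition hA3 : bag (bag (bag unit)) := cls [cls [n1; n2]; cls [n1]; cls [n2]].
Definition hA (n : nat) : X2 bagM unit := match n with 0 => hA0 | 2 => hA2 | _ => hA3 end.

Definition hB0 : bag (bag (bag unit)) := cls [cls [n1; n1]; cls [n2; n2]].
Definition hB1 : bag (bag (bag unit)) := cls [cls [n1; n3]; cls [n2; n4]].
Definition hB3 : bag (bag (bag unit)) := cls [cls [n1]; cls [n2]; cls [n1; n2]; cls [n1; n3]].
Definition hB (n : nat) : X2 bagM unit := match n with 0 => hB0 | 1 => hB1 | _ => hB3 end.

Lemma hornA : is_horn3 bagM unit e0 1 hA.
Proof.
  intros i j Hij Hj Hi Hj1.
  destruct i as [|[|[|[|i]]]]; try lia; destruct j as [|[|[|[|j]]]]; try lia;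
  unfold d2, hA, hA0, hA2, hA3, e0; cbn; norm; try reflexivity.
  apply cls_eq. apply perm_skip. apply perm_swap.
Qed.

Lemma hornB : is_horn3 bagM unit e0 2 hB.
Proof.
  intros i j Hij Hj Hi Hj1.
  destruct i as [|[|[|[|i]]]]; try lia; destruct j as [|[|[|[|j]]]]; try lia;
  unfold d2, hB, hB0, hB1, hB3, e0; cbn; norm; try reflexivity.
  apply cls_eq. apply perm_skip. apply perm_swap.
Qed.

Lemma cons_inj {X} (a b : X) l l' : a :: l = b :: l' -> a = b /\ l = l'.
Proof. intro E; injection E; auto. Qed.

Lemma bmu_single {X} (c : bag X) : bmu (cls [c]) = c.
Proof. exact (mu_eta_l bagM X c). Qed.

Lemma nofillA : ~ has_filler3 bagM unit e0 1 hA.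
Proof.
  intros [y Hy].
  pose proof (Hy 0 ltac:(lia) ltac:(lia)) as H0.
  pose proof (Hy 2 ltac:(lia) ltac:(lia)) as H2.
  pose proof (Hy 3 ltac:(lia) ltac:(lia)) as H3.
  unfold d3, hA in H0, H2, H3; cbn in H0, H2, H3.
  assert (Hm : mem (cls [n2]) (bmap (bmap (bmap e0)) y)).
  { rewrite H0. unfold hA0. apply mem_cls. left; reflexivity. }
  apply mem_bmap_inv in Hm as [P [HP EP]].
  apply bmap_inv in EP as [[|b [|]] [-> EP]]; try discriminate.
  apply cons_inj in EP as [EP _].
  apply bmap_inv in EP as [[|c1 [|c2 [|]]] [-> ?Eq]]; try discriminate.
  assert (Hm2 : mem (bmu (cls [cls [c1; c2]])) hA2) by (rewrite <- H2; apply mem_bmap; exact HP).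
  unfold hA2 in Hm2. rewrite mem_cls in Hm2.
  change (bmu (cls [cls [c1; c2]])) with (bmu (cls (map cls [[c1;c2]]))) in Hm2.
  rewrite bmu_cls in Hm2. cbn in Hm2.
  assert (Hm3 : mem (cls [c1; c2]) hA3).
  { rewrite <- H3. eapply mem_bmu; [|exact HP]. apply mem_cls; left; reflexivity. } unfold hA3 in Hm3. rewrite mem_cls in Hm3.
  destruct Hm2 as [E|[E|[]]]; apply cls_eq, Permutation_length_2_inv in E;
  destruct E as [E|E]; injection E as <- <-;
  destruct Hm3 as [E|[E|[E|[]]]]; apply cls_eq in E;
  try (apply Permutation_length in E; discriminate);
  apply Permutation_length_2_inv in E; destruct E as [E|E]; injection E as E1 E2;
  apply n12; congruence.
Qed.

Lemma nofillB : ~ has_filler3 bagM unit e0 2 hB.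
Proof.
  intros [y Hy].
  pose proof (Hy 0 ltac:(lia) ltac:(lia)) as H0.
  pose proof (Hy 1 ltac:(lia) ltac:(lia)) as H1.
  pose proof (Hy 3 ltac:(lia) ltac:(lia)) as H3.
  unfold d3, hB in H0, H1, H3; cbn in H0, H1, H3.
  assert (Hm : mem (cls [n1; n1]) (bmap (bmap (bmap e0)) y)).
  { rewrite H0. unfold hB0. apply mem_cls. left; reflexivity. }
  apply mem_bmap_inv in Hm as [P [HP EP]].
  apply bmap_inv in EP as [[|b1 [|b2 [|]]] [-> EP]]; try discriminate.
  apply cons_inj in EP as [EP1 EP]. apply cons_inj in EP as [EP2 _].
  apply bmap_inv in EP1 as [[|c1 [|]] [-> ?Eq]]; try discriminate.
  apply bmap_inv in EP2 as [[|c2 [|]] [-> ?Eq]]; try discriminate.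
  assert (Hm1 : mem (bmap bmu (cls [cls [c1]; cls [c2]])) hB1) by (rewrite <- H1; apply mem_bmap; exact HP).
  unfold hB1 in Hm1.
  rewrite bmap_cls in Hm1. cbn [map] in Hm1.
  rewrite !bmu_single in Hm1. rewrite mem_cls in Hm1.
  assert (Hc : forall c, mem (cls [c]) (bmu y) -> c = n1 \/ c = n2).
  { intros c Hc. assert (Hc' : mem (cls [c]) hB3) by (rewrite <- H3; exact Hc). clear Hc; rename Hc' into Hc. unfold hB3 in Hc. rewrite mem_cls in Hc.
    destruct Hc as [E|[E|[E|[E|[]]]]]; apply cls_eq in E;
    try (apply Permutation_length in E; discriminate);
    apply Permutation_length_1_inv in E; apply cons_inj in E as [E _]; subst; auto. }
  assert (Hc1 : c1 = n1 \/ c1 = n2).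
  { apply Hc. eapply mem_bmu; [|exact HP]. apply mem_cls; left; reflexivity. }
  assert (Hc2 : c2 = n1 \/ c2 = n2).
  { apply Hc. eapply mem_bmu; [|exact HP]. apply mem_cls; right; left; reflexivity. }
  destruct Hm1 as [E|[E|[]]]; apply cls_eq, Permutation_length_2_inv in E;
  destruct E as [E|E]; apply cons_inj in E as [E1 E]; apply cons_inj in E as [E2 _];
  destruct Hc1 as [Hc1|Hc1]; destruct Hc2 as [Hc2|Hc2]; rewrite Hc1 in E1; rewrite Hc2 in E2;
  first [ apply cls_eq, Permutation_length in E1; discriminate
        | apply cls_eq, Permutation_length in E2; discriminate ].
Qed.

Theorem theorem4p7 :
  exists (M : Monad) (A : Type) (e : T M A -> A),
    finitary M /\ weakly_cartesian M /\ is_algebra M A e /\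
    (exists x : nat -> X2 M A,
        is_horn3 M A e 1 x /\ ~ has_filler3 M A e 1 x) /\
    (exists x : nat -> X2 M A,
        is_horn3 M A e 2 x /\ ~ has_filler3 M A e 2 x).
Proof.
  exists bagM, unit, e0.
  split; [exact bagM_fin|]. split; [exact bagM_wc|].
  split; [split; [intros []; reflexivity|intros; reflexivity]|].
  split.
  - exists hA; split; [exact hornA|exact nofillA].
  - exists hB; split; [exact hornB|exact nofillB].
Qed.
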